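(* For any positive integer $n$, as formal power series in $z$, \[ \begin{aligned} \frac{ (-tzq;q)_{n} }{ (zq;q)_{n} } &= 1+ \sum_{m=1}^{n-1} \left( \overline{ {n+m-1 \brack 2m } }_{q,t} + t\, \overline{ {n+m-2 \brack 2m-1 } }_{q,t} \right) z^{2m} q^{2m^2+2m} \frac{ (-tzq;q)_{m} }{(zq;q)_{m}} \\ &\quad+\sum_{m=1}^{n} \overline{ {n+m-1 \brack 2m-1 } }_{q,t} z^{2m-1} q^{2m^2 - m} \frac{ (-tzq;q)_{m} }{(zq;q)_{m}} \\&\quad + \sum_{m=1}^{n} \overline{ {n+m-2 \brack 2m-2 } }_{q,t}\, t z^{2m-1} q^{2m^2-m} \frac{ (-tzq;q)_{m-1} }{(zq;q)_{m-1}} . \end{aligned} \]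
   Context: An overpartition is a partition in which the last occurrence of each distinct part size may be overlined; its weight $|\lambda|$ is the sum of its parts. For integers $0\le b\le a$, $\overline{{a \brack b}}_{q,t}=\sum_{\lambda} t^{\#_o(\lambda)} q^{|\lambda|}$, the sum over all overpartitions $\lambda$ with largest part at most $a-b$ and at most $b$ parts, $\#_o(\lambda)$ being the number of overlined parts; for other integer pairs $(a,b)$ it is $0$. $(x;q)_k=\prod_{j=1}^k(1-xq^{j-1})$, $(x;q)_0=1$. *)

(* Defs.v *)
From HB Require Import structures.
From mathcomp Require Import all_boot all_order all_algebra.
Set Implicit Arguments. Unset Strict Implicit. Unset Printing Implicit Defensive.
Import Order.TTheory GRing.Theory.
Local Open Scope ring_scope.

(* Formal power series in z over a commutative ring R, represented by
   their coefficient sequences: f k is the coefficient of z^k. *)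
Definition fps (R : Type) := nat -> R.

Section FPS.
Variable R : comNzRingType.

Definition fps_one : fps R := fun k => (k == 0%N)%:R.
Definition fps_add (f g : fps R) : fps R := fun k => f k + g k.
Definition fps_mul (f g : fps R) : fps R :=
  fun k => \sum_(i < k.+1) f i * g (k - i)%N.
Definition fps_monom (c : R) (j : nat) : fps R := fun k => if k == j then c else 0.

(* Multiplicative inverse of a power series with constant term 1:
   b_0 = 1, b_n = - sum_{k=1}^n f_k b_{n-k}  (so that f * b = 1 when f 0 = 1).
   inv_coefs f n = [:: b_0; ...; b_n]. *)
Fixpoint inv_coefs (f : fps R) (n : nat) : seq R :=
  match n with
  | 0 => [:: 1]
  | n'.+1 => let s := inv_coefs f n' in
             rcons s (- \sum_(i < n) f (n - i)%N * nth 0 s i)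
  end.
Definition fps_inv1 (f : fps R) : fps R := fun n => nth 0 (inv_coefs f n) n.

Definition fps_lin (c : R) : fps R :=
  fun k => if k == 0%N then 1 else if k == 1%N then - c else 0.

(* (a z; q)_k = prod_{j=1}^k (1 - a z q^{j-1}) as a power series in z *)
Definition qpoch_z (a q : R) (k : nat) : fps R :=
  foldr fps_mul fps_one [seq fps_lin (a * q ^+ j) | j <- iota 0 k].

Definition poch_ratio (q t : R) (m : nat) : fps R :=
  fps_mul (qpoch_z (- (t * q)) q m) (fps_inv1 (qpoch_z q q m)).

(* Overpartitions with largest part <= a - b and at most b parts.
   Such an overpartition is encoded by f : 'I_(a-b) -> 'I_(b.+1) * bool:
   (f i).1 is the multiplicity of the part size i+1 and (f i).2 says whether
   the last occurrence of that part size is overlined (allowed only if the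
   part size occurs). *)
Definition overpart_ok (a b : nat) (f : {ffun 'I_(a - b) -> 'I_b.+1 * bool}) : bool :=
  ((\sum_(i < a - b) ((f i).1 : nat)) <= b)%N &&
  [forall i, (f i).2 ==> (0 < (f i).1)%N].

Definition overpart_weight (a b : nat) (f : {ffun 'I_(a - b) -> 'I_b.+1 * bool}) : nat :=
  \sum_(i < a - b) (i.+1 * (f i).1)%N.

Definition overpart_novl (a b : nat) (f : {ffun 'I_(a - b) -> 'I_b.+1 * bool}) : nat :=
  \sum_(i < a - b) ((f i).2 : nat).

Definition obinom (q t : R) (a b : nat) : R :=
  if (b <= a)%N then
    \sum_(f : {ffun 'I_(a - b) -> 'I_b.+1 * bool} | overpart_ok f)
      t ^+ overpart_novl f * q ^+ overpart_weight f
  else 0.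

End FPS.

(* Main.v *)
Require Import Defs.
From mathcomp Require Import all_boot all_order all_algebra.
From mathcomp Require Import ring zify.
From Stdlib Require Import FunctionalExtensionality.
Set Implicit Arguments. Unset Strict Implicit. Unset Printing Implicit Defensive.
Import GRing.Theory.
Local Open Scope ring_scope.

Section FPSAlg.
Variable R : comNzRingType.
Implicit Types f g h : fps R.

Definition trp (N : nat) f : {poly R} := \poly_(i < N) f i.

Lemma mul_tr N k f g : (k < N)%N -> fps_mul f g k = (trp N f * trp N g)`_k.
Proof.
move=> kN; rewrite coefM; apply: eq_bigr => i _.
rewrite !coef_poly; have /= hi := ltn_ord i.
rewrite ifT; last by lia.
by rewrite ifT //; lia.
Qed.

Lemma coefM_ext (P P' Q : {poly R}) k :
  (forall i, (i <= k)%N -> P`_i = P'`_i) -> (P * Q)`_k = (P' * Q)`_k.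
Proof.
move=> H; rewrite !coefM; apply: eq_bigr => i _; rewrite H //.
by have := ltn_ord i; lia.
Qed.

Lemma fps_mulC f g : fps_mul f g = fps_mul g f.
Proof.
apply: functional_extensionality => k.
by rewrite (@mul_tr k.+1) // (@mul_tr k.+1 k g) // mulrC.
Qed.

Lemma trp_mul N f g i : (i < N)%N -> (trp N (fps_mul f g))`_i = (trp N f * trp N g)`_i.
Proof. by move=> iN; rewrite coef_poly iN (@mul_tr N). Qed.

Lemma fps_mulA f g h : fps_mul f (fps_mul g h) = fps_mul (fps_mul f g) h.
Proof.
apply: functional_extensionality => k.
rewrite (@mul_tr k.+1) // (@mul_tr k.+1 k (fps_mul f g)) //.
rewrite [trp k.+1 f * _]mulrC (@coefM_ext (trp k.+1 (fps_mul g h)) (trp k.+1 g * trp k.+1 h)); last first.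
  by move=> i ik; rewrite trp_mul.
rewrite (@coefM_ext (trp k.+1 (fps_mul f g)) (trp k.+1 f * trp k.+1 g)); last first.
  by move=> i ik; rewrite trp_mul.
by rewrite mulrC mulrA.
Qed.

Lemma fps_mul1 f : fps_mul (fps_one R) f = f.
Proof.
apply: functional_extensionality => k.
rewrite /fps_mul big_ord_recl /= /fps_one eqxx mul1r subn0 big1 ?addr0 // => i _.
by rewrite /bump /= mul0r.
Qed.

Lemma fps_mul_monom c j g k :
  fps_mul (fps_monom c j) g k = if (j <= k)%N then c * g (k - j)%N else 0.
Proof.
rewrite /fps_mul /fps_monom.
rewrite (eq_bigr (fun i : 'I_k.+1 => if (i == j :> nat) then c * g (k - i)%N else 0)); last first.
  by move=> i _; case: eqP => _; rewrite ?mul0r.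
rewrite -big_mkcond /= (big_ord1_eq _ (fun i => c * g (k - i)%N)) ltnS.
done.
Qed.

Lemma fps_mul_lin c g k :
  fps_mul g (fps_lin c) k = if k is k'.+1 then g k - c * g k' else g 0%N.
Proof.
rewrite fps_mulC /fps_mul big_ord_recl /= /fps_lin /= subn0 mul1r.
case: k => [|k]; first by rewrite big_ord0 addr0.
rewrite big_ord_recl /= big1 ?addr0; last by move=> i _; rewrite /bump /= mul0r.
by rewrite subSS subn0 mulNr.
Qed.


Lemma size_inv_coefs f n : size (inv_coefs f n) = n.+1.
Proof. by elim: n => //= n IH; rewrite size_rcons IH. Qed.

Lemma nth_inv_coefs f n i : (i <= n)%N -> nth 0 (inv_coefs f n) i = fps_inv1 f i.
Proof.
rewrite /fps_inv1; elim: n => [|n IH] hi.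
  by have -> : i = 0%N by lia.
case: (ltnP i n.+1) => hin.
  by rewrite /= nth_rcons size_inv_coefs hin IH.
by have -> : i = n.+1 by lia.
Qed.

Lemma fps_inv1S f n :
  fps_inv1 f n.+1 = - \sum_(i < n.+1) f (n.+1 - i)%N * fps_inv1 f i.
Proof.
rewrite {1}/fps_inv1 /= nth_rcons size_inv_coefs ltnn eqxx.
by congr (- _); apply: eq_bigr => i _; rewrite nth_inv_coefs // -ltnS.
Qed.

Lemma fps_mul_inv f : f 0%N = 1 -> fps_mul f (fps_inv1 f) = fps_one R.
Proof.
move=> f0; apply: functional_extensionality => k.
rewrite /fps_mul /fps_one; case: k => [|k].
  by rewrite big_ord_recl big_ord0 /= f0 /fps_inv1 /= mul1r addr0.
rewrite big_ord_recl /= f0 mul1r subn0 fps_inv1S.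
rewrite [X in - X](reindex_inj rev_ord_inj) /=.
rewrite [X in - X](eq_bigr (fun i : 'I_k.+1 => f (bump 0 i) * fps_inv1 f (k.+1 - bump 0 i)%N)) ?addNr // => i _.
congr (f _ * fps_inv1 f _); rewrite /bump /=; have := ltn_ord i; lia.
Qed.

Lemma fps_mul1r f : fps_mul f (fps_one R) = f.
Proof. by rewrite fps_mulC fps_mul1. Qed.

Lemma qpoch_S (a q : R) n :
  qpoch_z a q n.+1 = fps_mul (qpoch_z a q n) (fps_lin (a * q ^+ n)).
Proof.
rewrite /qpoch_z -addn1 iotaD map_cat foldr_cat /= add0n.
set x := fps_lin _.
have : forall s y, foldr (@fps_mul R) (fps_mul x y) s = fps_mul (foldr (@fps_mul R) y s) x.
  elim=> [|h s IH] y /=; first by rewrite fps_mulC.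
  by rewrite IH fps_mulA.
by move=> ->.
Qed.

Lemma qpoch0 (a q : R) n : qpoch_z a q n 0%N = 1.
Proof.
elim: n => [|n IH]; first by rewrite /qpoch_z /= /fps_one.
by rewrite qpoch_S fps_mul_lin IH.
Qed.

End FPSAlg.

Section Poch.
Variables (R : comNzRingType) (q t : R).
Notation F := (poch_ratio q t).

Lemma F0 : F 0 = fps_one R.
Proof.
rewrite /poch_ratio /qpoch_z /= fps_mul1.
by rewrite -[RHS](@fps_mul_inv _ (fps_one R)) ?fps_mul1.
Qed.

Lemma F_lin n : fps_mul (F n.+1) (fps_lin (q * q ^+ n)) = fps_mul (F n) (fps_lin (- (t * q) * q ^+ n)).
Proof.
set D := qpoch_z q q.
have HI : fps_inv1 (D n) = fps_mul (fps_inv1 (D n.+1)) (fps_lin (q * q ^+ n)).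
  have H1 : fps_mul (D n) (fps_mul (fps_inv1 (D n.+1)) (fps_lin (q * q ^+ n))) = fps_one R.
    rewrite [fps_mul (fps_inv1 _) _]fps_mulC fps_mulA -qpoch_S fps_mul_inv //.
    exact: qpoch0.
  rewrite -[LHS]fps_mul1r -H1 fps_mulA [fps_mul (fps_inv1 _) _]fps_mulC fps_mul_inv ?fps_mul1 //.
  exact: qpoch0.
rewrite /poch_ratio -/D -fps_mulA -HI qpoch_S.
rewrite -fps_mulA [fps_mul (fps_lin _) _]fps_mulC fps_mulA //.
Qed.

Lemma F_rec n k : F n.+1 k.+1 = F n k.+1 + q ^+ n.+1 * (F n.+1 k + t * F n k).
Proof.
have := congr1 (fun f => f k.+1) (F_lin n); rewrite /= !fps_mul_lin => H.
have -> : F n.+1 k.+1 = F n k.+1 + (t * q) * q ^+ n * F n k + q * q ^+ n * F n.+1 k.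
  by rewrite -[LHS](subrK (q * q ^+ n * F n.+1 k)) H; ring.
rewrite exprS; ring.
Qed.

Lemma F_rec0 n : F n.+1 0%N = F n 0%N.
Proof. by have := congr1 (fun f => f 0%N) (F_lin n); rewrite /= !fps_mul_lin. Qed.

Lemma F_at0 n : F n 0%N = 1.
Proof. by elim: n => [|n IH]; rewrite ?F0 ?F_rec0. Qed.

End Poch.
Section OB.
Variables (R : comNzRingType) (q t : R).

Fixpoint Gs (c b : nat) : R :=
  match c with
  | 0 => 1
  | c'.+1 => \sum_(m < b.+1) (if m == 0%N :> nat then 1 else 1 + t) * q ^+ (c'.+1 * m) * Gs c' (b - m)
  end.

Lemma Gs_0b b : Gs 0 b = 1. Proof. by []. Qed.

Lemma Gs_c0 c : Gs c 0 = 1.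
Proof. by case: c => //= c; rewrite big_ord1 /= muln0 expr0 !mul1r; elim: c => //= c; rewrite big_ord1 /= muln0 expr0 !mul1r. Qed.

Lemma Gs_rec c b : Gs c.+1 b.+1 = Gs c b.+1 + q ^+ c.+1 * (Gs c.+1 b + t * Gs c b).
Proof.
rewrite /= big_ord_recl /= muln0 expr0 !mul1r subn0; congr (_ + _).
rewrite big_ord_recl [in RHS]big_ord_recl /= !muln0 !muln1 expr0 subn0 subn1 /=.
rewrite (eq_bigr (fun i : 'I_b => q ^+ c.+1 * ((1 + t) * q ^+ (c.+1 * bump 0 i) * Gs c (b - bump 0 i)))).
  by rewrite -big_distrr /=; ring.
move=> i _; rewrite /bump /= subSS.
have -> : (c.+1 * (1 + (1 + i)) = c.+1 + c.+1 * (1 + i))%N by lia.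
by rewrite exprD; ring.
Qed.

Definition okc c B b (f : {ffun 'I_c -> 'I_B.+1 * bool}) : bool :=
  ((\sum_(i < c) ((f i).1 : nat)) <= b)%N && [forall i, (f i).2 ==> (0 < (f i).1)%N].
Definition wtc c B (f : {ffun 'I_c -> 'I_B.+1 * bool}) : nat := \sum_(i < c) (i.+1 * (f i).1)%N.
Definition nvc c B (f : {ffun 'I_c -> 'I_B.+1 * bool}) : nat := \sum_(i < c) ((f i).2 : nat).
Definition Sc c B b := \sum_(f : {ffun 'I_c -> 'I_B.+1 * bool} | okc b f) t ^+ nvc f * q ^+ wtc f.

Lemma obinom_S a b : (b <= a)%N -> obinom q t a b = Sc (a - b) b b.
Proof. by move=> h; rewrite /obinom h. Qed.

Lemma Sc_0 B b : Sc 0 B b = 1.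
Proof.
rewrite /Sc (big_pred1 [ffun i => (ord0, false)]).
  by rewrite /nvc /wtc !big_ord0 mulr1.
move=> f /=; rewrite /okc big_ord0 /=.
have -> : f == [ffun i => (ord0, false)] by apply/eqP/ffunP => -[].
by apply/forallP => -[].
Qed.


Section Split.
Variables (c B : nat).
Notation X := ('I_B.+1 * bool)%type.

Definition hsp (p : X * {ffun 'I_c -> X}) : {ffun 'I_c.+1 -> X} :=
  [ffun i => if unlift ord_max i is Some j then p.2 j else p.1].
Definition hsp' (f : {ffun 'I_c.+1 -> X}) : X * {ffun 'I_c -> X} :=
  (f ord_max, [ffun j => f (lift ord_max j)]).

Lemma hsp_bij : bijective hsp.
Proof.
exists hsp'.
  move=> [x g]; rewrite /hsp' /hsp /= ffunE unlift_none; congr (_, _).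
  by apply/ffunP => j; rewrite !ffunE liftK.
move=> f; apply/ffunP => i; rewrite /hsp /hsp' ffunE /=.
by case: (unliftP ord_max i) => [j ->|->]; rewrite ?ffunE.
Qed.

Lemma widen_lift (j : 'I_c) : widen_ord (leqnSn c) j = lift ord_max j.
Proof. by apply: val_inj; rewrite /= /bump leqNgt ltn_ord. Qed.

Lemma hsp_widen p (j : 'I_c) : hsp p (widen_ord (leqnSn c) j) = p.2 j.
Proof. by rewrite widen_lift /hsp ffunE liftK. Qed.

Lemma hsp_max p : hsp p ord_max = p.1.
Proof. by rewrite /hsp ffunE unlift_none. Qed.

Lemma sum_hsp (G : X -> nat) p :
  (\sum_(i < c.+1) G (hsp p i) = \sum_(i < c) G (p.2 i) + G p.1)%N.
Proof.
rewrite big_ord_recr /= hsp_max; congr (_ + _)%N.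
by apply: eq_bigr => i _; rewrite hsp_widen.
Qed.

Lemma sum_hsp_w p :
  (\sum_(i < c.+1) (i.+1 * (hsp p i).1) = \sum_(i < c) (i.+1 * (p.2 i).1) + c.+1 * p.1.1)%N.
Proof.
rewrite big_ord_recr /= hsp_max; congr (_ + _)%N.
by apply: eq_bigr => i _; rewrite hsp_widen.
Qed.

Lemma forall_hsp (P : X -> bool) p :
  [forall i, P (hsp p i)] = [forall j, P (p.2 j)] && P p.1.
Proof.
apply/forallP/andP => [H|[/forallP H1 H2] i].
  split; last by have := H ord_max; rewrite hsp_max.
  by apply/forallP => j; have := H (widen_ord (leqnSn c) j); rewrite hsp_widen.
by case: (unliftP ord_max i) => [j ->|->]; rewrite -?widen_lift ?hsp_widen ?hsp_max.
Qed.

End Split.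

Lemma Sc_S c B b : (b <= B)%N ->
  Sc c.+1 B b = \sum_(m < b.+1) (if m == 0%N :> nat then 1 else 1 + t) * q ^+ (c.+1 * m) * Sc c B (b - m).
Proof.
move=> bB.
rewrite /Sc (reindex (@hsp c B)); last exact: onW_bij (@hsp_bij c B).
rewrite (eq_bigl (fun p : ('I_B.+1 * bool) * {ffun 'I_c -> 'I_B.+1 * bool} => ((p.1.1 <= b)%N && (p.1.2 ==> (0 < p.1.1)%N)) && okc (b - p.1.1) p.2)); last first.
  move=> [x g] /=; rewrite /okc (sum_hsp (fun y : 'I_B.+1 * bool => (y.1 : nat))).
  rewrite (forall_hsp (fun y : 'I_B.+1 * bool => y.2 ==> (0 < y.1)%N)) /=.
  case: (leqP x.1 b) => hx /=.
    rewrite -[(_ <= b - x.1)%N](leq_add2r x.1) (subnK hx).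
    by case: (_ <= _)%N; case: [forall _, _]; case: (_ ==> _).
  have -> : (\sum_(i < c) (g i).1 + x.1 <= b)%N = false.
    by apply/negbTE; rewrite -ltnNge; apply: (leq_trans hx); apply: leq_addl.
  done.
rewrite -(pair_big_dep (fun x : 'I_B.+1 * bool => (x.1 <= b)%N && (x.2 ==> (0 < x.1)%N))
   (fun x g => okc (b - x.1) g) (fun x g => t ^+ nvc (hsp (x, g)) * q ^+ wtc (hsp (x, g)))) /=.
rewrite (eq_bigr (fun x : 'I_B.+1 * bool => t ^+ x.2 * q ^+ (c.+1 * x.1) *
     \sum_(g : {ffun 'I_c -> 'I_B.+1 * bool} | okc (b - x.1) g) t ^+ nvc g * q ^+ wtc g)); last first.
  move=> x _; rewrite big_distrr /=; apply: eq_bigr => g _.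
  rewrite /nvc /wtc (sum_hsp (fun y => (y.2 : nat))) sum_hsp_w /= !exprD; ring.
rewrite -(pair_big_dep (fun m : 'I_B.+1 => (m <= b)%N) (fun m (fl : bool) => fl ==> (0 < m)%N)
   (fun m fl => t ^+ fl * q ^+ (c.+1 * m) * Sc c B (b - m))) /=.
rewrite [RHS](big_ord_widen B.+1 (fun m => (if m == 0%N :> nat then 1 else 1 + t) * q ^+ (c.+1 * m) * Sc c B (b - m))) //.
apply: eq_bigr => m _.
rewrite big_mkcond big_bool /=.
case: (posnP m) => [->|mp] /=; ring.
Qed.

Lemma Sc_Gs c B b : (b <= B)%N -> Sc c B b = Gs c b.
Proof.
elim: c b => [|c IH] b bB; first by rewrite Sc_0.
rewrite Sc_S //=; apply: eq_bigr => m _; rewrite IH //.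
by apply: leq_trans bB; apply: leq_subr.
Qed.

Lemma obinom_Gs a b : (b <= a)%N -> obinom q t a b = Gs (a - b) b.
Proof. by move=> h; rewrite obinom_S // Sc_Gs. Qed.

End OB.

Section Main.
Variables (R : comNzRingType) (q t : R).
Notation F := (poch_ratio q t).
Notation G := (Gs q t).

Definition fr (r j : nat) : nat := ((j + r)./2).+1.

Arguments fr : simpl never.

Lemma frS r j : fr r j.+1 = fr r.+1 j.
Proof. by rewrite /fr addSn addnS. Qed.

Lemma fr_mono r j : (fr r 0 <= fr r j)%N.
Proof. by rewrite /fr ltnS add0n; apply: half_leq; apply: leq_addl. Qed.

Lemma fr_step r : (fr r 0 <= fr r 1 <= (fr r 0).+1)%N.
Proof.
rewrite /fr add0n add1n /= !ltnS; have := uphalf_half r; rewrite /=.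
move=> ->; case: (odd r) => /=; lia.
Qed.

Definition term (r n k j : nat) : R :=
  if (fr r j <= n)%N && (j <= k)%N then
    q ^+ (j * fr r j)%N * (G (n - fr r j)%N j * F (fr r j.+1).-1 (k - j)%N
      + (if j is j'.+1 then t * G (n - fr r j)%N j' * F (fr r j).-1 (k - j)%N else 0))
  else 0.

Definition T (r n k : nat) : R := \sum_(j < k.+1) term r n k j.

Lemma term0 r n k : term r n k 0 = if (fr r 0 <= n)%N then F (fr r 1).-1 k else 0.
Proof.
rewrite /term /= andbT; case: ifP => // _.
by rewrite Gs_c0 expr0 mul1r mul1r subn0 addr0.
Qed.

Lemma term_pt r n k j :
  term r n.+1 k.+1 j.+1 = term r n k.+1 j.+1
    + q ^+ n.+1 * (term r.+1 n.+1 k j + t * term r.+1 n k j)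
    + (if (j == 0%N) && (fr r 1 == n.+1) then t * q ^+ n.+1 * F n k else 0).
Proof.
rewrite /term !frS subSS.
case: (boolP (j <= k)%N) => hjk; last first.
  rewrite ?(ltnS j k) (negbTE hjk) !andbF.
  by case: j hjk => // j _; rewrite andFb; ring.
rewrite ?(ltnS j k) hjk !andbT.
case: j hjk => [|j] hjk.
  rewrite !Gs_c0 !mul0n !expr0 !mul1r ?mul1n ?subn0 !addr0.
  move: (fr r.+1 0) (fr r.+2 0) => a b.
  case: (ltngtP a n.+1) => han.
  - have han' : (a <= n)%N by rewrite -ltnS.
    rewrite ?han' ?(ltnW han) ?(gtn_eqF han) /=.
    have -> : (n.+1 - a = (n - a).+1)%N by rewrite subSn.
    have E : q ^+ n.+1 = q ^+ a * q ^+ (n - a).+1 by rewrite -exprD addnS subnKC.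
    rewrite E Gs_rec !Gs_c0; ring.
  - rewrite ?(leqNgt a n.+1) ?han /= ?(leqNgt a n) ?(ltn_trans (ltnSn n) han) /= ?(ltn_eqF han) /=; by rewrite !(mulr0, addr0).
  - rewrite ?han ?leqnn ?ltnn ?eqxx ?subnn /=; ring.
rewrite andFb addr0.
move: (fr r.+1 j.+1) (fr r.+2 j.+1) (k - j.+1)%N => a b kk.
case: (ltngtP a n.+1) => han.
- have han' : (a <= n)%N by rewrite -ltnS.
  rewrite ?han' ?(ltnW han) /=.
  have -> : (n.+1 - a = (n - a).+1)%N by rewrite subSn.
  have E : q ^+ n.+1 = q ^+ a * q ^+ (n - a).+1 by rewrite -exprD addnS subnKC.
  rewrite E !Gs_rec (mulSn j.+1) exprD; ring.
- rewrite ?(leqNgt a n.+1) ?han /= ?(leqNgt a n) ?(ltn_trans (ltnSn n) han) /=; by rewrite !(mulr0, addr0).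
- rewrite ?han ?leqnn ?ltnn ?subnn /= (mulSn j.+1) exprD; ring.
Qed.


Lemma T_zero r n k : (n < fr r 0)%N -> T r n k = 0.
Proof.
move=> h; apply: big1 => j _; rewrite /term; case: ifP => // /andP [h1 _].
have := leq_trans (fr_mono r j) h1; rewrite leqNgt h //.
Qed.

Lemma if_split (a n : nat) (X : R) :
  (if (a <= n.+1)%N then X else 0) = (if (a <= n)%N then X else 0) + (if a == n.+1 then X else 0).
Proof.
case: (ltngtP a n.+1) => h.
- have h' : (a <= n)%N by rewrite -ltnS.
  by rewrite ?(ltnW h) h' /= ?(gtn_eqF h) addr0.
- by rewrite ?(leqNgt a n.+1) ?h /= ?(leqNgt a n) ?(ltn_trans (ltnSn n) h) ?(ltn_eqF h) addr0.
- by rewrite ?h ?leqnn ?ltnn ?eqxx /= add0r.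
Qed.

Lemma T_key r n k :
  T r n.+1 k = T r n k
    + (if k is k'.+1 then q ^+ n.+1 * (T r.+1 n.+1 k' + t * T r.+1 n k')
          + (if fr r 1 == n.+1 then t * q ^+ n.+1 * F n k' else 0) else 0)
    + (if fr r 0 == n.+1 then F (fr r 1).-1 k else 0).
Proof.
case: k => [|k].
  by rewrite /T !big_ord1 !term0 addr0 if_split.
rewrite /T big_ord_recl [X in _ = X + _ + _]big_ord_recl !term0.
rewrite (eq_bigr (fun j : 'I_k.+1 => term r n k.+1 (bump 0 j) + q ^+ n.+1 * (term r.+1 n.+1 k j + t * term r.+1 n k j) + (if (j == 0%N :> nat) && (fr r 1 == n.+1) then t * q ^+ n.+1 * F n k else 0))); last first.
  by move=> j _; rewrite /bump add1n term_pt.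
rewrite !big_split /=.
have E3 : \sum_(i < k.+1) (if (i == 0%N :> nat) && (fr r 1 == n.+1) then t * q ^+ n.+1 * F n k else 0)
   = if fr r 1 == n.+1 then t * q ^+ n.+1 * F n k else 0.
  by rewrite big_ord_recl big1 ?addr0 // => i _.
rewrite E3 -big_distrr /= big_split /= -big_distrr /= if_split.
ring.
Qed.

Lemma T_main n : forall r k, T r n k = if (fr r 0 <= n)%N then F n k else 0.
Proof.
elim: n => [|n IH] r k.
  have h0 : (0 < fr r 0)%N by rewrite /fr.
  by rewrite T_zero // leqNgt h0.
suff H : forall d r, (n.+1.*2 <= r + d)%N -> forall k, T r n.+1 k = if (fr r 0 <= n.+1)%N then F n.+1 k else 0.
  by apply: (H n.+1.*2 r); rewrite leq_addl.
elim=> [|d IHd] {}r hr {}k.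
  have hf : (n.+1 < fr r 0)%N.
    rewrite /fr add0n ltnS; move: hr; rewrite addn0 => hr.
    by rewrite -(half_double n.+1) half_leq.
  by rewrite T_zero // leqNgt hf.
have IHr : forall k, T r.+1 n.+1 k = if (fr r.+1 0 <= n.+1)%N then F n.+1 k else 0.
  by apply: IHd; rewrite addSn -addnS.
rewrite T_key IH.
have [h0 h1] := andP (fr_step r).
rewrite -frS in IHr.
case: k => [|k].
  rewrite addr0 F_at0 F_at0 -if_split.
  by rewrite F_at0.
rewrite IHr IH frS -frS.
rewrite F_rec.
move: (fr r 0) (fr r 1) h0 h1 => a0 a1 h0 h1.
have [ha1|ha1] := eqVneq a1 n.+1.
  rewrite ha1; rewrite ha1 in h0 h1.
  have -> : (n.+1 <= n.+1)%N by [].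
  have -> : (n.+1 <= n)%N = false by rewrite ltnn.
  have [ha0|ha0] := eqVneq a0 n.+1.
    by rewrite ha0 ?ltnn ?eqxx ?ltnSn /=; ring.
  have -> : (a0 <= n)%N by lia.
  have -> : (a0 <= n.+1)%N by lia.
  ring.
rewrite ?(negbTE ha1).
have [ha0|ha0] := eqVneq a0 n.+1.
  rewrite ha0 ?ltnn ?eqxx ?leqnn /=.
  have ha1' : a1 = n.+2 by lia.
  rewrite ha1' /= ltnn.
  have -> : (n.+1 < n)%N = false by apply/negbTE; lia.
  rewrite F_rec; ring.
rewrite ?(negbTE ha0).
case: (leqP a0 n) => h.
  have -> : (a1 <= n.+1)%N by lia.
  have -> : (a1 <= n)%N by lia.
  have -> : (a0 <= n.+1)%N by lia.
  ring.
have -> : (a1 <= n.+1)%N = false by apply/negbTE; lia.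
have -> : (a1 <= n)%N = false by apply/negbTE; lia.
have -> : (a0 <= n.+1)%N = false by apply/negbTE; lia.
ring.
Qed.


Lemma fr0_even m : fr 0 (2 * m) = m.+1.
Proof. by rewrite /fr addn0 mul2n doubleK. Qed.

Lemma fr0_odd m : fr 0 (2 * m).+1 = m.+1.
Proof. by rewrite /fr addn0 mul2n /= uphalf_double. Qed.

Lemma Ev_eq n k m : (1 <= m < n)%N ->
  term 0 n k (2 * m) =
  fps_mul (fps_monom ((obinom q t (n + m - 1) (2 * m) + t * obinom q t (n + m - 2) (2 * m - 1))
                      * q ^+ (2 * m ^ 2 + 2 * m)) (2 * m)) (F m) k.
Proof.
case/andP => hm hmn.
rewrite fps_mul_monom /term fr0_even fr0_odd hmn /=.
case: (2 * m <= k)%N; rewrite ?andbF ?andbT //.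
rewrite !obinom_Gs; try lia.
case: m hm hmn => [|m] // _ hmn.
have -> : (2 * m.+1 = (2 * m).+1.+1)%N by lia.
rewrite /=.
have -> : (n + m.+1 - 1 - (2 * m).+2 = n - m.+2)%N by lia.
have -> : (n + m.+1 - 2 - ((2 * m).+2 - 1) = n - m.+2)%N by lia.
have -> : ((2 * m).+2 - 1 = (2 * m).+1)%N by lia.
have -> : ((2 * m).+2 * m.+2 = 2 * m.+1 ^ 2 + (2 * m).+2)%N by rewrite expnS expn1; lia.
ring.
Qed.


Lemma Od_eq n k m : (m < n)%N ->
  term 0 n k (2 * m).+1 =
  fps_mul (fps_monom (obinom q t (n + m.+1 - 1) (2 * m.+1 - 1) * q ^+ (2 * m.+1 ^ 2 - m.+1))
                     (2 * m.+1 - 1)) (F m.+1) k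
  + fps_mul (fps_monom (obinom q t (n + m.+1 - 2) (2 * m.+1 - 2) * t * q ^+ (2 * m.+1 ^ 2 - m.+1))
                     (2 * m.+1 - 1)) (F (m.+1 - 1)) k.
Proof.
move=> hmn.
have e1 : (2 * m.+1 - 1 = (2 * m).+1)%N by lia.
have e2 : ((2 * m).+2 = 2 * m.+1)%N by lia.
rewrite !fps_mul_monom /term fr0_odd e2 fr0_even e1 hmn /=.
case: ((2 * m).+1 <= k)%N; rewrite ?andbF ?andbT ?addr0 //.
rewrite !obinom_Gs; try lia.
have -> : (n + m.+1 - 1 - (2 * m).+1 = n - m.+1)%N by lia.
have -> : (n + m.+1 - 2 - (2 * m.+1 - 2) = n - m.+1)%N by lia.
have -> : (2 * m.+1 - 2 = 2 * m)%N by lia.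
have -> : ((2 * m).+1 * m.+1 = 2 * m.+1 ^ 2 - m.+1)%N by rewrite expnS expn1; lia.
rewrite subn1 /=; ring.
Qed.

Lemma sum_double (f : nat -> R) N :
  \sum_(j < N.*2) f j = \sum_(m < N) (f (2 * m)%N + f (2 * m).+1).
Proof.
elim: N => [|N IH]; first by rewrite !big_ord0.
rewrite doubleS !big_ord_recr /= IH -mul2n -addrA; congr (_ + (f _ + f _)).
Qed.


Lemma term_big r n k j : (k < j)%N -> term r n k j = 0.
Proof. by move=> h; rewrite /term (leqNgt j k) h andbF. Qed.

Lemma term_zero r n k j : (n < fr r j)%N -> term r n k j = 0.
Proof. by move=> h; rewrite /term (leqNgt (fr r j) n) h. Qed.

Lemma main_eq n : (0 < n)%N ->
  forall k : nat,
    poch_ratio q t n k =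
      fps_one R k
      + \sum_(1 <= m < n)
          fps_mul (fps_monom
                     ((obinom q t (n + m - 1) (2 * m)
                       + t * obinom q t (n + m - 2) (2 * m - 1))
                      * q ^+ (2 * m ^ 2 + 2 * m)) (2 * m))
                  (poch_ratio q t m) k
      + \sum_(1 <= m < n.+1)
          fps_mul (fps_monom (obinom q t (n + m - 1) (2 * m - 1)
                              * q ^+ (2 * m ^ 2 - m)) (2 * m - 1))
                  (poch_ratio q t m) k
      + \sum_(1 <= m < n.+1)
          fps_mul (fps_monom (obinom q t (n + m - 2) (2 * m - 2) * t
                              * q ^+ (2 * m ^ 2 - m)) (2 * m - 1))
                  (poch_ratio q t (m - 1)) k.
Proof.
move=> n0 k.
have := T_main n 0 k; rewrite (_ : fr 0 0 = 1%N) // n0 => <-.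
rewrite /T (big_ord_widen (n + k).*2 (term 0 n k)); last by lia.
rewrite big_mkcond /=.
rewrite (eq_bigr (fun j : 'I_(n + k).*2 => term 0 n k j)); last first.
  by move=> j _; case: ifP => // /negbT; rewrite -leqNgt => h; rewrite term_big.
rewrite sum_double big_split /=.
rewrite -(big_mkord xpredT (fun m => term 0 n k (2 * m))).
rewrite -(big_mkord xpredT (fun m => term 0 n k (2 * m).+1)).
rewrite big_ltn; last by lia.
rewrite (big_cat_nat _ (n := n)) /=; [|lia|lia].
rewrite [X in _ + (_ + X) + _]big_nat_cond [X in _ + (_ + X) + _]big1; last first.
  by move=> m /andP [/andP [h1 h2] _]; rewrite term_zero // fr0_even.
rewrite (big_cat_nat _ (n := n) (m := 0)) /=; [|lia|lia].
rewrite [X in _ + (_ + X)]big_nat_cond [X in _ + (_ + X)]big1; last first.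
  by move=> m /andP [/andP [h1 h2] _]; rewrite term_zero // fr0_odd.
rewrite !addr0 muln0 term0 (_ : fr 0 0 = 1%N) // n0 (_ : fr 0 1 = 1%N) // /= F0.
rewrite (eq_big_nat _ _ (fun m hm => Ev_eq k hm)).
rewrite (eq_big_nat _ _ (fun m (hm : (0 <= m < n)%N) => Od_eq k (proj2 (andP hm)))).
rewrite big_split /= !big_add1 /=.
by rewrite !addrA.
Qed.

End Main.

Unset Implicit Arguments.

Theorem theorem4p3 (R : comNzRingType) (q t : R) (n : nat) :
  (0 < n)%N ->
  forall k : nat,
    poch_ratio q t n k =
      fps_one R k
      + \sum_(1 <= m < n)
          fps_mul (fps_monom
                     ((obinom q t (n + m - 1) (2 * m)
                       + t * obinom q t (n + m - 2) (2 * m - 1))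
                      * q ^+ (2 * m ^ 2 + 2 * m)) (2 * m))
                  (poch_ratio q t m) k
      + \sum_(1 <= m < n.+1)
          fps_mul (fps_monom (obinom q t (n + m - 1) (2 * m - 1)
                              * q ^+ (2 * m ^ 2 - m)) (2 * m - 1))
                  (poch_ratio q t m) k
      + \sum_(1 <= m < n.+1)
          fps_mul (fps_monom (obinom q t (n + m - 2) (2 * m - 2) * t
                              * q ^+ (2 * m ^ 2 - m)) (2 * m - 1))
                  (poch_ratio q t (m - 1)) k.
Proof. exact: main_eq. Qed.
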